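(* Let $m\ge2$ and $n$ be positive integers. For each complex matrix $a=(a_{\mathbf i})_{\mathbf i\in\mathcal M(m,n)}$ and each nonempty $S\subset\mathcal M(m,n)$, \[\frac{\sum_{\mathbf i\in S}|a_{\mathbf i}|}{E(S)}\le m\,\|a\|_{\ell_{\frac{m}{m-1},\infty}},\qquad\text{where } E(S):=\max_{1\le k\le m}\operatorname{card}\{i_k:\mathbf i\in S\}.\]
   Context: $\mathcal M(m,n)=\{\mathbf i=(i_1,\dots,i_m):1\le i_k\le n\}$. For $1\le p<\infty$ and a finite index set $I$, $\|x\|_{\ell_{p,\infty}(I)}=\sup_k k^{1/p}x_k^*$, where $x^*$ is the non-increasing rearrangement of $(|x_i|)_{i\in I}$. *)

(* Defs.v *)
From HB Require Import structures.
From mathcomp Require Import all_boot all_order all_algebra.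
From mathcomp Require Import reals exp.
From mathcomp Require Import complex.
Set Implicit Arguments. Unset Strict Implicit. Unset Printing Implicit Defensive.
Import Order.TTheory GRing.Theory Num.Theory.
Local Open Scope ring_scope.

(* Multi-indices M(m,n): i = (i_1,...,i_m) with coordinates in {0,...,n-1}
   (0-based instead of 1-based). *)
Notation multi_index m n := {ffun 'I_m -> 'I_n}.

Definition decr_rearr (R : realType) (I : finType) (x : I -> R) : seq R :=
  sort (fun u v : R => v <= u) [seq `|x i| | i <- enum I].

Definition weak_lp_norm (R : realType) (I : finType) (p : R) (x : I -> R) : R :=
  \big[Num.max/0]_(k < #|I|)
     ((k.+1)%:R `^ (p^-1) * nth 0 (decr_rearr x) k).

Definition Ecard (m n : nat) (S : {set multi_index m n}) : nat :=
  \max_(k < m) #|[set (f : multi_index m n) k | f in S]|.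

(* Main.v *)
Require Import Defs.
From HB Require Import structures.
From mathcomp Require Import all_boot all_order all_algebra.
From mathcomp Require Import reals exp.
From mathcomp Require Import complex.
From mathcomp Require Import zify ring lra.
Import Order.TTheory GRing.Theory Num.Theory.
Local Open Scope ring_scope.

Lemma count_enum_card (I : finType) (P : pred I) : count P (enum I) = #|P|.
Proof. by rewrite cardE /enum_mem size_filter (@eq_filter _ _ predT) ?filter_predT. Qed.

Lemma count_sorted_lt (R : realType) (s : seq R) k (t : R) :
  sorted (fun u v : R => v <= u) s -> (k < size s)%N -> nth 0 s k < t ->
  (count (fun v => (t <= v)%R) s <= k)%N.
Proof.
move=> ss hk hlt.
have hall : all (fun v => v < t) (drop k s).
  apply/(all_nthP 0) => j; rewrite size_drop => hj; rewrite nth_drop.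
  apply: le_lt_trans hlt.
  have htr : transitive (fun u v : R => v <= u).
    by move=> a b c hab hbc; apply: le_trans hbc hab.
  have := @sorted_leq_nth _ (fun u v : R => v <= u) htr (fun a => lexx a) 0 s ss k (k + j)%N.
  apply; rewrite ?inE /=; try lia. by rewrite -ltn_subRL.
rewrite -{1}(cat_take_drop k s) count_cat.
have -> : count (fun v => t <= v) (drop k s) = 0%N.
  apply/eqP; rewrite -leqn0 leqNgt -has_count; apply/hasPn => v hv.
  by rewrite -ltNge; move/allP: hall; apply.
rewrite addn0; apply: leq_trans (count_size _ _) _.
by rewrite size_take hk.
Qed.

Lemma keyF (R : realType) (I : finType) (p : R) (x : I -> R) (A : {set I}) (t : R) :
  A != set0 -> (forall j, j \in A -> t <= x j) ->
  #|A|%:R `^ p^-1 * t <= weak_lp_norm p x.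
Proof.
move=> hA ht.
have htot : total (fun u v : R => v <= u) by move=> u v; apply: le_total.
have hsz : size (decr_rearr x) = #|I| by rewrite size_sort size_map -cardT.
have hc : (0 < #|A|)%N by rewrite card_gt0.
have hcI : (#|A| <= #|I|)%N by apply: max_card.
have hk : (#|A|.-1 < #|I|)%N by lia.
have key : t <= nth 0 (decr_rearr x) #|A|.-1.
  rewrite leNgt; apply/negP => hlt.
  have := @count_sorted_lt R _ _ _ (sort_sorted htot _) _ hlt.
  rewrite -/(decr_rearr x) hsz => /(_ hk).
  have hp : perm_eq (decr_rearr x) [seq `|x i| | i <- enum I] by rewrite /decr_rearr perm_sort.
  rewrite (permP hp) count_map count_enum_card.
  have : (#|A| <= #|[pred i | (t <= `|x i|)%R]|)%N.
    apply: subset_leq_card; apply/subsetP => j hj; rewrite inE.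
    exact: le_trans (ht _ hj) (ler_norm _).
  move=> h1 h2.
  have := leq_trans h1 h2; lia.
apply: le_trans (le_bigmax _ _ (Ordinal hk)) => /=.
rewrite prednK //; apply: ler_wpM2l => //; exact: powR_ge0.
Qed.

Lemma step_ineq (R : realType) (m : nat) (u v : R) : (0 < m)%N -> 0 <= v -> 0 <= u ->
  u ^+ m = v ^+ m + 1 -> v <= u /\ 1 <= m%:R * u ^+ m.-1 * (u - v).
Proof.
move=> hm hv hu huv.
have vu : v <= u.
  rewrite leNgt; apply/negP => hlt.
  have := ltrXn2r m hu hlt; rewrite -lt0n hm huv => h.
  by move: h; apply/negP; rewrite -leNgt lerDl.
split=> //.
have h1 : 1 = (u - v) * \sum_(i < m) u ^+ (m.-1 - i) * v ^+ i.
  by rewrite -subrXX huv addrC addKr.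
have h2 : \sum_(i < m) u ^+ (m.-1 - i) * v ^+ i <= m%:R * u ^+ m.-1.
  have -> : m%:R * u ^+ m.-1 = \sum_(i < m) u ^+ m.-1 by rewrite sumr_const card_ord mulr_natl.
  apply: ler_sum => i _.
  have hi : (m.-1 - i + i)%N = m.-1 by have := ltn_ord i; lia.
  rewrite -[X in _ <= u ^+ X]hi exprD ler_wpM2l ?exprn_ge0 //.
  by apply: lerXn2r; rewrite ?inE.
rewrite {1}h1 mulrC; apply: ler_wpM2r => //; by rewrite subr_ge0.
Qed.

Lemma rpow_m (R : realType) (m N : nat) : (0 < m)%N ->
  (N%:R `^ (m%:R^-1) : R) ^+ m = N%:R.
Proof.
move=> hm; rewrite -powR_mulrn ?powR_ge0 // -powRrM mulVf ?powRr1 //.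
by rewrite pnatr_eq0 -lt0n.
Qed.

Lemma rpow_p (R : realType) (m N : nat) : (2 <= m)%N ->
  (N%:R `^ ((m%:R / (m.-1)%:R)^-1) : R) = (N%:R `^ (m%:R^-1)) ^+ m.-1.
Proof.
move=> hm; rewrite invf_div mulrC powRrM powR_mulrn // powR_ge0 //.
Qed.

Lemma W_ge0 (R : realType) (I : finType) (p : R) (x : I -> R) : 0 <= weak_lp_norm p x.
Proof. exact: bigmax_ge_id. Qed.

Lemma mainS (R : realType) (I : finType) (m : nat) (hm : (2 <= m)%N) (x : I -> R)
  (hx : forall i, 0 <= x i) (N : nat) : forall S : {set I}, #|S| = N ->
  \sum_(i in S) x i <= m%:R * weak_lp_norm (m%:R / (m.-1)%:R) x * (N%:R `^ (m%:R^-1)).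
Proof.
have hW := @W_ge0 R I (m%:R / (m.-1)%:R) x.
elim: N => [|N IH] S hS.
  have -> : S = set0 by apply/eqP; rewrite -cards_eq0 hS.
  by rewrite big_set0 !mulr_ge0 ?powR_ge0.
have hS0 : S != set0 by rewrite -card_gt0 hS.
have [i1 hi1] := set0Pn _ hS0.
have [i0 hi0 hmin] := arg_minP x hi1.
have {}hi0 : i0 \in S := hi0.
rewrite (big_setD1 i0 hi0) /=.
have hk := @keyF R I (m%:R / (m.-1)%:R) x S (x i0) hS0 hmin.
rewrite hS rpow_p // in hk.
have hcS : #|S :\ i0| = N.
  by move: hS; rewrite (cardsD1 i0 S) hi0 add1n => -[].
have IH' := IH (S :\ i0) hcS.
have hm0 : (0 < m)%N by apply: ltnW.
have huv : ((N.+1)%:R `^ (m%:R^-1) : R) ^+ m = (N%:R `^ (m%:R^-1)) ^+ m + 1.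
  by rewrite !rpow_m // natr1.
have [vu hst] := @step_ineq R m ((N.+1)%:R `^ (m%:R^-1)) (N%:R `^ (m%:R^-1))
  hm0 (powR_ge0 _ _) (powR_ge0 _ _) huv.
set u := (N.+1)%:R `^ _ in hk hst vu *.
set v := N%:R `^ _ in IH' hst vu *.
set W := weak_lp_norm _ _ in hW hk IH' *.
set a := u ^+ m.-1 in hk hst.
have ha : 0 <= a by rewrite exprn_ge0 ?powR_ge0.
have hd : 0 <= m%:R * (u - v) by rewrite mulr_ge0 ?subr_ge0.
have hx0 : x i0 <= W * (m%:R * (u - v)).
  apply: (@le_trans _ _ (x i0 * (m%:R * a * (u - v)))).
    by rewrite -{1}[x i0]mulr1 ler_wpM2l.
  rewrite (mulrC (m%:R) a) -mulrA mulrA (mulrC _ a).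
  by apply: ler_wpM2r.
have : x i0 + \sum_(i in S :\ i0) x i <= W * (m%:R * (u - v)) + m%:R * W * v.
  exact: lerD.
move/le_trans; apply; rewrite le_eqVlt; apply/orP; left; apply/eqP; ring.
Qed.

Lemma foldr_bound (T : Type) (g : T -> nat) (E : nat) (s : seq T) :
  (forall k, g k <= E)%N -> (foldr muln 1%N [seq g k | k <- s] <= E ^ size s)%N.
Proof.
move=> hg; elim: s => [|k s IH] //=.
by rewrite expnS leq_mul.
Qed.

Lemma card_bound (m n : nat) (S : {set multi_index m n}) :
  (#|S| <= Ecard S ^ m)%N.
Proof.
pose P k := [set (f : multi_index m n) k | f in S].
have h1 : (#|S| <= #|family (fun k => [pred y | y \in P k])|)%N.
  apply: subset_leq_card; apply/subsetP => f hf; apply/familyP => k.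
  by rewrite inE; apply: imset_f.
apply: leq_trans h1 _; rewrite card_family.
rewrite -[X in (_ <= _ ^ X)%N](size_enum_ord m).
apply: foldr_bound => k.
apply: leq_trans (leq_bigmax k); rewrite /P.
by apply: eq_leq; apply: eq_card => y; rewrite inE.
Qed.

Theorem lemma4p1 (R : realType) (m n : nat) (hm : (2 <= m)%N) (hn : (0 < n)%N)
  (a : multi_index m n -> R[i]) (S : {set multi_index m n}) (hS : S != set0) :
  (\sum_(i in S) ComplexField.Normc.normc (a i)) / (Ecard S)%:R
    <= m%:R * weak_lp_norm (m%:R / (m.-1)%:R) (fun i => ComplexField.Normc.normc (a i)).
Proof.
set x := fun i => ComplexField.Normc.normc (a i).
have hx : forall i, 0 <= x i by move=> i; rewrite /x; case: (a i) => u v /=; apply: sqrtr_ge0.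
have hm0 : (0 < m)%N by apply: ltnW.
have [f hf] := set0Pn _ hS.
have hE : (0 < Ecard S)%N.
  apply: leq_trans (leq_bigmax (Ordinal hm0)).
  by rewrite card_gt0; apply/set0Pn; exists (f (Ordinal hm0)); apply: imset_f.
rewrite ler_pdivrMr ?ltr0n //.
have := @mainS R _ m hm x hx #|S| S erefl.
move/le_trans; apply.
have hW := @W_ge0 R _ (m%:R / (m.-1)%:R) x.
apply: ler_wpM2l; first by rewrite mulr_ge0.
rewrite -(ler_pXn2r hm0) ?nnegrE ?powR_ge0 ?ler0n // (rpow_m R m #|S| hm0) -natrX ler_nat.
exact: card_bound.
Qed.
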